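(* Let $z$ be a positive integer and let $C$ be a quasi-cyclic LDPC code with circulant matrices of size $z$ whose base matrix is the $8\times 24$ matrix $H_{b(2/3B)}$ below. Then there is no quasi-cyclic LDPC code $D$ with circulant matrices of size $z$ such that (i) the parity-check matrices $H_C$ and $H_D$ have the same row-weight distribution, (ii) every column of $H_D$ has Hamming weight at least $2$, and (iii) $D^{\perp}\subset C$. The rows of $H_{b(2/3B)}$ are: 101010101010101011000000, 010101010101010101100000, 101010101010101000110000, 010101010101010100011000, 101010101010101000001100, 010101010101010100000110, 101010101010101010000011, 010101010101010110000001.
   Context: All codes are binary linear codes over $\mathbb{F}_2$; $D^{\perp}=\{d' : d\,d'^T=0\ \forall d\in D\}$. For a positive integer $z$, $I_z(1)$ is the $z\times z$ circulant permutation matrix of one circular right shift and $I_z(b)=I_z(1)^b$. A quasi-cyclic LDPC code with circulant matrices of size $z$ is given by a $J\times L$ model matrix with entries in $\{0,\dots,z-1\}\cup\{\infty\}$; its parity-check matrix $H$ is obtained by replacing each finite entry $p$ by $I_z(p)$ and each $\infty$ by the $z\times z$ zero matrix, and the code is $\{x\in\mathbb{F}_2^{zL}:Hx^T=0\}$. Its base matrix is the binary $J\times L$ matrix with $1$ exactly where the model entry is finite. The row-weight distribution of a binary matrix is the multiset of Hamming weights of its rows (for each $w$, the number of rows of weight $w$). The matrix $H_{b(2/3B)}$ is the base matrix of the rate-$2/3$B LDPC codes of the IEEE802.16e standard. *)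

(* Defs.v *)
From mathcomp Require Import all_boot all_order all_algebra.
Set Implicit Arguments. Unset Strict Implicit. Unset Printing Implicit Defensive.
Import GRing.Theory.
Local Open Scope ring_scope.

Lemma blk_pos (J z : nat) (k : 'I_(J * z)) : (0 < z)%N.
Proof.
have H : (nat_of_ord k < J * z)%N := ltn_ord k.
have H0 : (0 < J * z)%N by apply: leq_ltn_trans H.
by move: H0; rewrite muln_gt0 => /andP[].
Qed.

Lemma blk_lt (J z : nat) (k : 'I_(J * z)) : (k %/ z < J)%N.
Proof. rewrite ltn_divLR ?(blk_pos k) //; exact: ltn_ord. Qed.

Lemma inb_lt (J z : nat) (k : 'I_(J * z)) : (k %% z < z)%N.
Proof. exact: ltn_pmod (blk_pos k). Qed.

Definition blk (J z : nat) (k : 'I_(J * z)) : 'I_J := Ordinal (blk_lt k).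
Definition inb (J z : nat) (k : 'I_(J * z)) : 'I_z := Ordinal (inb_lt k).

(* I_z(b): the z x z circulant permutation matrix = (I_z(1))^b, where I_z(1)
   is the identity circularly shifted right by one: row i has its 1 in
   column (i + b) mod z. *)
Definition circ (z : nat) (b : nat) : 'M['F_2]_z :=
  \matrix_(i < z, j < z) ((j : nat) == (i + b) %% z)%N%:R.

(* Model matrix: entries in {0,...,z-1} ∪ {∞}, with ∞ represented by None. *)
Definition model_mx (z J L : nat) := 'M[option 'I_z]_(J, L).

Definition qc_pcm (z J L : nat) (M : model_mx z J L) : 'M['F_2]_(J * z, L * z) :=
  \matrix_(k, l)
    match M (blk k) (blk l) with
    | Some p => circ z p (inb k) (inb l)
    | None => 0
    end.

Definition base_mx (z J L : nat) (M : model_mx z J L) : 'M['F_2]_(J, L) :=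
  \matrix_(i, j) (M i j != None)%:R.

Definition code_of (m n : nat) (H : 'M['F_2]_(m, n)) : {set 'rV['F_2]_n} :=
  [set x : 'rV['F_2]_n | H *m x^T == 0].

Definition dual_code (n : nat) (D : {set 'rV['F_2]_n}) : {set 'rV['F_2]_n} :=
  [set d' : 'rV['F_2]_n | [forall d in D, d *m d'^T == 0]].

Definition row_wt (m n : nat) (H : 'M['F_2]_(m, n)) (i : 'I_m) : nat :=
  #|[set j : 'I_n | H i j != 0]|.
Definition col_wt (m n : nat) (H : 'M['F_2]_(m, n)) (j : 'I_n) : nat :=
  #|[set i : 'I_m | H i j != 0]|.

Definition same_row_wt_distr (m1 m2 n1 n2 : nat)
  (H1 : 'M['F_2]_(m1, n1)) (H2 : 'M['F_2]_(m2, n2)) : Prop :=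
  forall w : nat, #|[set i | row_wt H1 i == w]| = #|[set i | row_wt H2 i == w]|.

(* The base matrix H_{b(2/3B)} of the IEEE 802.16e rate-2/3B LDPC codes. *)
Definition hb23B_rows : seq (seq nat) :=
  [:: [:: 1;0;1;0;1;0;1;0;1;0;1;0;1;0;1;0;1;1;0;0;0;0;0;0];
      [:: 0;1;0;1;0;1;0;1;0;1;0;1;0;1;0;1;0;1;1;0;0;0;0;0];
      [:: 1;0;1;0;1;0;1;0;1;0;1;0;1;0;1;0;0;0;1;1;0;0;0;0];
      [:: 0;1;0;1;0;1;0;1;0;1;0;1;0;1;0;1;0;0;0;1;1;0;0;0];
      [:: 1;0;1;0;1;0;1;0;1;0;1;0;1;0;1;0;0;0;0;0;1;1;0;0];
      [:: 0;1;0;1;0;1;0;1;0;1;0;1;0;1;0;1;0;0;0;0;0;1;1;0];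
      [:: 1;0;1;0;1;0;1;0;1;0;1;0;1;0;1;0;1;0;0;0;0;0;1;1];
      [:: 0;1;0;1;0;1;0;1;0;1;0;1;0;1;0;1;1;0;0;0;0;0;0;1] ].

Definition Hb23B : 'M['F_2]_(8, 24) :=
  \matrix_(i < 8, j < 24) (nth 0%N (nth [::] hb23B_rows i) j)%:R.

(* Main.v *)
Require Import Defs.
From mathcomp Require Import all_boot all_order all_algebra.
From mathcomp Require Import zify.
Set Implicit Arguments. Unset Strict Implicit. Unset Printing Implicit Defensive.
Import GRing.Theory.
Local Open Scope ring_scope.

Lemma blk_inb_eq J z (k k' : 'I_(J*z)) : blk k = blk k' -> inb k = inb k' -> k = k'.
Proof.
move=> /(congr1 val) /= H1 /(congr1 val) /= H2.
by apply: val_inj => /=; rewrite (divn_eq k z) (divn_eq k' z) H1 H2.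
Qed.

Lemma mk_lt J z (i : 'I_J) (t : 'I_z) : (i * z + t < J * z)%N.
Proof. have := ltn_ord i; have := ltn_ord t; nia. Qed.

Lemma sum_blk J z (i : 'I_J) (t : 'I_z) :
  \sum_(k < J * z | blk k == i) ((inb k == t)%:R : 'F_2) = 1.
Proof.
rewrite (eq_bigr (fun k => if inb k == t then 1 else 0)); last by move=> k _; case: eqP.
rewrite -big_mkcondr /=.
pose k0 : 'I_(J*z) := Ordinal (mk_lt i t).
have zpos : (0 < z)%N by apply: leq_ltn_trans (ltn_ord t).
have Hb : blk k0 = i by apply: val_inj; rewrite /= divnMDl // divn_small ?addn0.
have Hi : inb k0 = t by apply: val_inj; rewrite /= modnMDl modn_small.

rewrite (big_pred1 k0).
  by [].
move=> k /=.
apply/andP/eqP => [[/eqP a /eqP b]|->].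
  by apply: blk_inb_eq; rewrite ?a ?b ?Hb ?Hi.
by rewrite Hb Hi !eqxx.
Qed.

Lemma circ_sym z p (a b : 'I_z) : (p < z)%N ->
  ((b : nat) == (a + p) %% z)%N = ((a : nat) == (b + (z - p)) %% z)%N.
Proof.
move=> pz.
have pz' : (p <= z)%N := ltnW pz.
apply/eqP/eqP => H.
  rewrite H modnDml -addnA (subnKC pz') modnDr.
  exact: (esym (modn_small (ltn_ord a))).
rewrite H modnDml -addnA (subnK pz') modnDr.
exact: (esym (modn_small (ltn_ord b))).
Qed.

Lemma colsum J L z (M : model_mx z J L) (l : 'I_(L*z)) :
  \sum_(k < J * z) qc_pcm M k l = \sum_(i < J) base_mx M i (blk l).
Proof.
rewrite (partition_big (@blk J z) predT) //=.
apply: eq_bigr => i _.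
rewrite mxE.
under eq_bigr => k /eqP Hk do rewrite mxE Hk.
case E: (M i (blk l)) => [p|] /=; last by rewrite big1.
have zpos : (0 < z)%N := blk_pos l.
pose t : 'I_z := Ordinal (ltn_pmod (inb l + (z - p))%N zpos).
rewrite -(sum_blk i t).
apply: eq_bigr => k _.
by rewrite mxE circ_sym.
Qed.


Lemma Hb_colsum (b : 'I_24) : \sum_(i < 8) Hb23B i b = ((b : nat) == 16%N)%:R.
Proof.
rewrite !big_ord_recr big_ord0 !mxE /=.
case: b => b hb /=.
do 24! (case: b hb => [|b] hb; first by apply/eqP; vm_compute).
by [].
Qed.

Theorem mainTheorem3 :
  forall (z : nat), (0 < z)%N ->
  forall (MC : model_mx z 8 24), base_mx MC = Hb23B ->
  ~ (exists (J : nat) (MD : model_mx z J 24),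
       [/\ same_row_wt_distr (qc_pcm MC) (qc_pcm MD),
           (forall j, (2 <= col_wt (qc_pcm MD) j)%N) &
           dual_code (code_of (qc_pcm MD)) \subset code_of (qc_pcm MC)]).
Proof.
move=> z zpos MC HMC [J [MD [_ Hcol Hsub]]].
set HC := qc_pcm MC. set HD := qc_pcm MD.
pose b16 : 'I_24 := Ordinal (isT : (16 < 24)%N).
have u1 (l : 'I_(24 * z)%N) : ((const_mx 1 : 'rV['F_2]_(8 * z)%N) *m HC) 0 l = ((blk l : nat) == 16%N)%:R.
  rewrite mxE (eq_bigr (fun k => HC k l)); last by move=> k _; rewrite /const_mx mxE mul1r.
  by rewrite colsum HMC Hb_colsum.
have rowD : forall r, row r HD \in dual_code (code_of HD).
  move=> r; rewrite inE; apply/forallP => d; apply/implyP; rewrite inE => /eqP Hd.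
  by rewrite -(trmxK (d *m _)) trmx_mul trmxK -row_mul Hd row0 trmx0.
have None16 : forall r : 'I_(J*z), MD (blk r) b16 = None.
  move=> r.
  have HCr : HC *m (row r HD)^T == 0 by have := subsetP Hsub _ (rowD r); rewrite inE.
  have := congr1 (fun A => ((const_mx 1 : 'rV['F_2]_(8 * z)%N) *m A) 0 0) (eqP HCr).
  rewrite /= mulmxA mulmx0 mxE [in RHS]mxE.
  under eq_bigr => l _ do rewrite u1 !mxE.
  case E: (MD (blk r) b16) => [p|] // Hs.
  have zpos' : (0 < z)%N := zpos.
  pose t : 'I_z := Ordinal (ltn_pmod (inb r + p)%N zpos').
  suff : (1 : 'F_2) = 0 by move/eqP; rewrite oner_eq0.
  rewrite -[LHS](sum_blk b16 t) -[RHS]Hs big_mkcond; apply: eq_bigr => l _.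
  case: (eqVneq (blk l) b16) => [Hl|Hl].
    by rewrite Hl E /= mul1r mxE.
  have Hl' : (blk l : nat) != 16%N by apply: contra Hl => /eqP Hv; apply/eqP/val_inj.
  by rewrite (negbTE Hl') mul0r.
pose l0 : 'I_(24 * z) := Ordinal (mk_lt b16 (Ordinal zpos)).
have Hl0 : blk l0 = b16 by apply: val_inj; rewrite /= addn0 mulnK.
have := Hcol l0.
rewrite /col_wt (_ : [set i | HD i l0 != 0] = set0) ?cards0 //.
apply/setP => i; rewrite !inE mxE Hl0 None16.
by rewrite eqxx.
Qed.
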